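(* Let $N\ge 1$ and let $\mathcal{N}=(p_1,\ldots,p_N)$ with $p_i>0$ and $\sum_{i=1}^N p_i=1$ be fixed. For each positive integer $M$, let $X_1,\ldots,X_M$ be independent random variables with values in $\bar N=\{1,\ldots,N\}$ and $\Pr(X_j=i)=p_i$, and let $\Pr(K\mid M,\mathcal{N})$ be the probability that exactly $K$ distinct values occur among $X_1,\ldots,X_M$. For $s\subseteq\bar N$ write $\Pr(s)=\sum_{i\in s}p_i$. For $i=1,\ldots,N$ let $s_i=\bar N\setminus\{i\}$ and $q_{M,i}=1-\Pr(s_i)^M$, and define the Poisson binomial distribution \[ Q(K\mid M,\mathcal{N})=\sum_{\{s\subseteq\bar N:\ |s|=K\}}\prod_{i\in s}q_{M,i}\prod_{j\in\bar N\setminus s}(1-q_{M,j}). \] Then \[ \lim_{M\to\infty}\ \max_{K=1,\ldots,N}\bigl|\Pr(K\mid M,\mathcal{N})-Q(K\mid M,\mathcal{N})\bigr|=0. \]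
   Context: $Q(\cdot\mid M,\mathcal{N})$ is the distribution of the number of successes among $N$ independent Bernoulli trials with success probabilities $q_{M,1},\ldots,q_{M,N}$. *)

(* Defs.v *)
From HB Require Import structures.
From mathcomp Require Import all_boot all_order all_algebra.
From mathcomp Require Import all_classical all_reals topology normedtype sequences.
Set Implicit Arguments. Unset Strict Implicit. Unset Printing Implicit Defensive.
Import Order.TTheory GRing.Theory Num.Theory.
Local Open Scope ring_scope.

(* The value set {1,...,N} is modelled by 'I_N (value i+1 <-> ordinal i).
   p : 'I_N -> R is the distribution N = (p_1,...,p_N). *)

Definition PrS (R : realType) (N : nat) (p : 'I_N -> R) (s : {set 'I_N}) : R :=
  \sum_(i in s) p i.

(* Pr(K | M, N): X_1..X_M i.i.d. with law p; the joint law of (X_1,...,X_M)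
   is the product measure on {ffun 'I_M -> 'I_N}, the outcome x having
   probability prod_j p (x j). *)
Definition PrK (R : realType) (N : nat) (p : 'I_N -> R) (M K : nat) : R :=
  \sum_(x : {ffun 'I_M -> 'I_N} | #|[set x j | j : 'I_M]| == K)
     \prod_(j : 'I_M) p (x j).

Definition qMi (R : realType) (N : nat) (p : 'I_N -> R) (M : nat) (i : 'I_N) : R :=
  1 - (PrS p [set~ i]) ^+ M.

Definition QK (R : realType) (N : nat) (p : 'I_N -> R) (M K : nat) : R :=
  \sum_(s : {set 'I_N} | #|s| == K)
     (\prod_(i in s) qMi p M i) * (\prod_(j in ~: s) (1 - qMi p M j)).

Definition maxdiff (R : realType) (N : nat) (p : 'I_N -> R) (M : nat) : R :=
  \big[Num.max/0]_(1 <= K < N.+1) `|PrK p M K - QK p M K|.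

(* Main.v *)
Require Import Defs.
From HB Require Import structures.
From mathcomp Require Import all_boot all_order all_algebra.
From mathcomp Require Import all_classical all_reals topology normedtype sequences.
From mathcomp Require Import lra.
Import Order.TTheory GRing.Theory Num.Theory.
Local Open Scope classical_set_scope.
Local Open Scope ring_scope.
Set Implicit Arguments. Unset Strict Implicit.

Lemma PrS_C1 (R : realType) (N : nat) (p : 'I_N -> R)
  (hsum : \sum_(i < N) p i = 1) i : PrS p [set~ i] = 1 - p i.
Proof.
rewrite -hsum (bigD1 i) //= addrC addrK /PrS.
by apply: eq_bigl => j; rewrite in_setC1.
Qed.

Lemma p_le1 (R : realType) (N : nat) (p : 'I_N -> R)
  (hpos : forall i, 0 < p i) (hsum : \sum_(i < N) p i = 1) i : p i <= 1.
Proof.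
rewrite -hsum (bigD1 i) //= lerDl; apply: sumr_ge0 => j _; exact: ltW.
Qed.

Definition EE (R : realType) (N : nat) (p : 'I_N -> R) (M : nat) : R :=
  \sum_(i < N) PrS p [set~ i] ^+ M.

Lemma r01 (R : realType) (N : nat) (p : 'I_N -> R)
  (hpos : forall i, 0 < p i) (hsum : \sum_(i < N) p i = 1) i M :
  0 <= PrS p [set~ i] ^+ M <= 1.
Proof.
rewrite PrS_C1 //; have h1 := hpos i; have h2 := p_le1 hpos hsum i.
by rewrite exprn_ge0 ?subr_ge0 // exprn_ile1 // ?subr_ge0 // lerBlDr lerDl ltW.
Qed.

Lemma EE_ge0 (R : realType) (N : nat) (p : 'I_N -> R)
  (hpos : forall i, 0 < p i) (hsum : \sum_(i < N) p i = 1) M : 0 <= EE p M.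
Proof. by apply: sumr_ge0 => i _; case/andP: (r01 hpos hsum i M). Qed.

Lemma EE_ge (R : realType) (N : nat) (p : 'I_N -> R)
  (hpos : forall i, 0 < p i) (hsum : \sum_(i < N) p i = 1) M j :
  PrS p [set~ j] ^+ M <= EE p M.
Proof.
rewrite /EE (bigD1 j) //= lerDl; apply: sumr_ge0 => i _.
by case/andP: (r01 hpos hsum i M).
Qed.

Lemma EE_cvg (R : realType) (N : nat) (p : 'I_N -> R)
  (hpos : forall i, 0 < p i) (hsum : \sum_(i < N) p i = 1) :
  (fun M => EE p M) @ \oo --> (0 : R^o).
Proof.
have -> : (fun M => EE p M) = \sum_(i < N) (fun M => PrS p [set~ i] ^+ M).
  by rewrite fct_sumE.
apply: (big_ind (fun f : nat -> R^o => f @ \oo --> (0:R^o))).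
- exact: (@cvg_cst R^o).
- move=> f g Hf Hg; rewrite -(addr0 0); exact: cvgD.
- move=> i _; apply: cvg_expr; rewrite PrS_C1 //.
  have h1 := hpos i; have h2 := p_le1 hpos hsum i.
  rewrite ger0_norm ?subr_ge0 //; lra.
Qed.

Definition bad (R : realType) (N : nat) (p : 'I_N -> R) (M : nat) : R :=
  \sum_(x : {ffun 'I_M -> 'I_N} | #|[set x j | j : 'I_M]| != N)
     \prod_(j : 'I_M) p (x j).

Lemma total (R : realType) (N : nat) (p : 'I_N -> R)
  (hsum : \sum_(i < N) p i = 1) M :
  \sum_(x : {ffun 'I_M -> 'I_N}) \prod_(j : 'I_M) p (x j) = 1.
Proof.
rewrite -(bigA_distr_bigA (fun (j : 'I_M) k => p k)) /=.
by rewrite hsum big1.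
Qed.

Lemma PrK_N (R : realType) (N : nat) (p : 'I_N -> R)
  (hsum : \sum_(i < N) p i = 1) M : PrK p M N = 1 - bad p M.
Proof.
rewrite -(total hsum M) (bigID (fun x : {ffun 'I_M -> 'I_N} => #|[set x j | j : 'I_M]| == N)) /=.
by rewrite addrK.
Qed.

Lemma PrK_K (R : realType) (N : nat) (p : 'I_N -> R)
  (hpos : forall i, 0 < p i) M K : K != N -> PrK p M K <= bad p M.
Proof.
move=> hK; rewrite /PrK /bad big_mkcond [X in _ <= X]big_mkcond /=.
apply: ler_sum => x _; case: eqP => [HK|_].
  by rewrite HK hK.
case: ifP => _ //; apply: prodr_ge0 => j _; exact: ltW.
Qed.

Lemma PrK_ge0 (R : realType) (N : nat) (p : 'I_N -> R)
  (hpos : forall i, 0 < p i) M K : 0 <= PrK p M K.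
Proof. apply: sumr_ge0 => x _; apply: prodr_ge0 => j _; exact: ltW. Qed.

Lemma bad_ge0 (R : realType) (N : nat) (p : 'I_N -> R)
  (hpos : forall i, 0 < p i) M : 0 <= bad p M.
Proof. apply: sumr_ge0 => x _; apply: prodr_ge0 => j _; exact: ltW. Qed.

Lemma bad_le (R : realType) (N : nat) (p : 'I_N -> R)
  (hpos : forall i, 0 < p i) (hsum : \sum_(i < N) p i = 1) M :
  bad p M <= EE p M.
Proof.
pose F (i : 'I_N) (k : 'I_N) := p k * (k != i)%:R.
have hF : forall i k, 0 <= F i k.
  by move=> i k; rewrite /F mulr_ge0 ?ler0n // ltW.
apply: (@le_trans _ _ (\sum_(x : {ffun 'I_M -> 'I_N}) \sum_(i < N) \prod_(j : 'I_M) F i (x j))).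
  rewrite /bad big_mkcond /=; apply: ler_sum => x _; case: ifP => Hx; last first.
    by apply: sumr_ge0 => i _; apply: prodr_ge0 => j _.
  have [i Hi] : exists i, i \notin [set x j | j : 'I_M].
    case: (pickP (fun i => i \notin [set x j | j : 'I_M])) => [i Hi|H0].
      by exists i.
    move/negP: Hx; case; apply/eqP.
    have -> : [set x j | j : 'I_M] = setTfor _.
      by apply/setP => i; rewrite inE; have := H0 i => /= /negbFE.
    by rewrite cardsT card_ord.
  rewrite (bigD1 i) //= -[X in X <= _]addr0; apply: lerD.
    rewrite [X in _ <= X](eq_bigr (fun j => p (x j))) //; move=> j _; rewrite /F.
    have -> : (x j != i) by apply: contra Hi => /eqP <-; apply: imset_f.
    by rewrite mulr1.
  by apply: sumr_ge0 => k _; apply: prodr_ge0 => j _.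
rewrite exchange_big /EE le_eqVlt; apply/orP; left; apply/eqP; apply: eq_bigr => i _.

rewrite -(bigA_distr_bigA (fun (j : 'I_M) k => F i k)) /=.
rewrite prodr_const card_ord; congr (_ ^+ _).
rewrite /PrS [RHS]big_mkcond; apply: eq_bigr => k _; rewrite in_setC1 /F.
by case: (k != i); rewrite ?mulr1 ?mulr0.
Qed.

Lemma prod_bound (R : realType) (I : finType) (r : I -> R) :
  (forall i, 0 <= r i <= 1) ->
  1 - \sum_i r i <= \prod_i (1 - r i) <= 1.
Proof.
move=> hr.
have : (0 <= \prod_i (1 - r i) <= 1 /\ 0 <= \sum_i r i) /\ 1 - \sum_i r i <= \prod_i (1 - r i).
  apply: (big_rec2 (fun x y => (0 <= x <= 1 /\ 0 <= y) /\ 1 - y <= x)).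
    by rewrite ler01 lexx subr0.
  move=> i x y _ [[/andP[hx0 hx1] hy] hxy]; have /andP[h0 h1] := hr i.
  split; first split.
  - apply/andP; split; nra.
  - nra.
  - nra.
by case=> [[/andP[_ ->] _] ->].
Qed.

Lemma card_eqN (N : nat) (s : {set 'I_N}) : (#|s| == N) = (s == setTfor _).
Proof.
rewrite eqEcard finset.subsetT cardsT card_ord /=.
have : (#|s| <= N)%N by rewrite -[X in (_ <= X)%N]card_ord max_card.
by rewrite eqn_leq => ->.
Qed.

Lemma QK_N (R : realType) (N : nat) (p : 'I_N -> R) M :
  QK p M N = \prod_i (1 - PrS p [set~ i] ^+ M).
Proof.
rewrite /QK (big_pred1 (setTfor _)); last by move=> s; rewrite /= card_eqN.
rewrite finset.setCT big_set0 mulr1; apply: eq_bigl => i; by rewrite inE.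
Qed.

Lemma QK_K (R : realType) (N : nat) (p : 'I_N -> R)
  (hpos : forall i, 0 < p i) (hsum : \sum_(i < N) p i = 1) M K : K != N ->
  0 <= QK p M K <= #|{set 'I_N}|%:R * EE p M.
Proof.
move=> hK.
have hq : forall i, 0 <= qMi p M i <= 1.
  move=> i; have /andP[h0 h1] := r01 hpos hsum i M; rewrite /qMi; apply/andP; split; lra.
have h1q : forall i, 0 <= 1 - qMi p M i <= 1.
  move=> i; have /andP[h0 h1] := r01 hpos hsum i M; rewrite /qMi; apply/andP; split; lra.
have hterm : forall s : {set 'I_N}, 0 <= (\prod_(i in s) qMi p M i) * (\prod_(j in ~: s) (1 - qMi p M j)).
  move=> s; apply: mulr_ge0; apply: prodr_ge0 => i _.
    by case/andP: (hq i).
  by case/andP: (h1q i).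
apply/andP; split; first by apply: sumr_ge0 => s _.
rewrite mulr_natl -sumr_const /QK [X in _ <= X](bigID (fun s : {set 'I_N} => #|s| == K)) /=.
rewrite -[X in X <= _]addr0; apply: lerD; last first.
  by apply: sumr_ge0 => s _; apply: EE_ge0.
apply: ler_sum => s /eqP hs.
have [j hj] : exists j, j \in ~: s.
  case: (pickP (fun j => j \in ~: s)) => [j Hj|H0]; first by exists j.
  move/eqP: hK; case; rewrite -hs; apply/eqP; rewrite card_eqN; apply/eqP.
  apply/setP => i; rewrite inE; have := H0 i => /=; rewrite inE => /negbFE ->.
  by [].
have hA : \prod_(i in s) qMi p M i <= 1 by apply: prodr_ile1.
have hA0 : 0 <= \prod_(i in s) qMi p M i by apply: prodr_ge0 => i _; case/andP: (hq i).
have hB : \prod_(i in ~: s) (1 - qMi p M i) <= PrS p [set~ j] ^+ M.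
  rewrite (bigD1 j) //= {2}/qMi opprB addrC subrK.
  have /andP[h0 _] := r01 hpos hsum j M.
  rewrite -[X in _ <= X]mulr1; apply: ler_wpM2l => //; apply: prodr_ile1 => i _; exact: h1q.
have hE := EE_ge hpos hsum M j.
have hB0 : 0 <= \prod_(i in ~: s) (1 - qMi p M i) by apply: prodr_ge0 => i _; case/andP: (h1q i).
nra.
Qed.

Theorem theorem1 (R : realType) (N : nat) (p : 'I_N -> R)
  (hN : (1 <= N)%N) (hpos : forall i, 0 < p i) (hsum : \sum_(i < N) p i = 1) :
  (fun M : nat => maxdiff p M) @ \oo --> (0 : R^o).
Proof.
have [C hCdef] : {C : R | C = #|{set 'I_N}|%:R} by exists #|{set 'I_N}|%:R.
have hC : 0 <= C by rewrite hCdef ler0n.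
have hb : forall M, 0 <= maxdiff p M <= (C + 2) * EE p M.
  move=> M; have hE := EE_ge0 hpos hsum M.
  rewrite /maxdiff; apply: (big_ind (fun x : R => 0 <= x <= (C + 2) * EE p M)).
  - apply/andP; split => //; nra.
  - move=> x y /andP[hx1 hx2] /andP[hy1 hy2]; apply/andP; split.
      by rewrite le_max hx1.
    by rewrite ge_max hx2 hy2.
  - move=> K _; apply/andP; split => //.
    have hP := PrK_ge0 hpos M K.
    case: (eqVneq K N) => [->|hK].
      rewrite PrK_N //.
      have := @prod_bound R _ (fun i => PrS p [set~ i] ^+ M) (fun i => r01 hpos hsum i M).
      rewrite -QK_N -/(EE p M).
      move=> /andP[h1 h2]; have h3 := bad_le hpos hsum M; have h4 := bad_ge0 hpos M.
      move: h1 h2 h3 h4 hE hC; set q := QK p M N; set b := bad p M; set e := EE p M.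
      move=> h1 h2 h3 h4 hE' hC'.
      rewrite ler_norml; apply/andP; split; nra.
    have /andP[hq1 hq2] := QK_K hpos hsum M hK; rewrite -hCdef in hq2.
    have h3 := PrK_K hpos M hK; have h4 := bad_le hpos hsum M.
    move: hq1 hq2 h3 h4 hE hC hP; set q := QK p M K; set b := bad p M; set e := EE p M.
    set a := PrK p M K => hq1 hq2 h3 h4 hE' hC' hP'.
    clearbody q b e a; have hCe : 0 <= C * e by apply: mulr_ge0.
    rewrite ler_norml; apply/andP; split; nra.
apply: (@squeeze_cvgr _ _ _ _ (fun=> 0) (fun M => (C + 2) * EE p M)).
- by apply: nearW => M; exact: hb.
- exact: (@cvg_cst R^o).
- rewrite -(mulr0 (C + 2)); apply: cvgM; first exact: (@cvg_cst R^o).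
  exact: EE_cvg.
Qed.
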